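(* Under the standing assumptions (A1)–(A6) below, the aNETT regularizer $\mathcal R\colon \mathbb X\to[0,\infty]$, $\mathcal R(x)=\psi(\mathbf E(x))+\frac{c}{2}\|x-\mathbf D(\mathbf E(x))\|^2$, is coercive.
   Context: Standing assumptions (A1)–(A6): (A1) $\mathbb X,\mathbb Y$ are real Hilbert spaces; (A2) $\Xi=\ell^2(\Lambda)$ for a countable index set $\Lambda$; (A3) $\mathbf K\colon\mathbb X\to\mathbb Y$ is (possibly nonlinear and) weakly sequentially continuous; (A4) the encoder $\mathbf E\colon\mathbb X\to\Xi$ is weakly sequentially continuous; (A5) the decoder $\mathbf D\colon\Xi\to\mathbb X$ is weakly sequentially continuous; (A6) $\psi\colon\Xi\to[0,\infty]$ is coercive and weakly sequentially lower semicontinuous. A constant $c>0$ is fixed. A functional $F\colon H\to[0,\infty]$ on a normed space is called coercive if every sequence $(x_n)$ with $(F(x_n))_n$ bounded is itself bounded in norm. *)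

(* Defs.v *)
From Stdlib Require Import Reals Lra List.
Open Scope R_scope.

Record Hilbert := {
  hcar :> Type;
  hadd : hcar -> hcar -> hcar;
  hopp : hcar -> hcar;
  hzero : hcar;
  hscal : R -> hcar -> hcar;
  hinner : hcar -> hcar -> R;
  hadd_assoc : forall x y z, hadd x (hadd y z) = hadd (hadd x y) z;
  hadd_comm : forall x y, hadd x y = hadd y x;
  hadd_zero : forall x, hadd x hzero = x;
  hadd_opp : forall x, hadd x (hopp x) = hzero;
  hscal_one : forall x, hscal 1 x = x;
  hscal_assoc : forall a b x, hscal a (hscal b x) = hscal (a * b) x;
  hscal_distr_l : forall a x y, hscal a (hadd x y) = hadd (hscal a x) (hscal a y);
  hscal_distr_r : forall a b x, hscal (a + b) x = hadd (hscal a x) (hscal b x);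
  hinner_sym : forall x y, hinner x y = hinner y x;
  hinner_add_l : forall x y z, hinner (hadd x y) z = hinner x z + hinner y z;
  hinner_scal_l : forall a x y, hinner (hscal a x) y = a * hinner x y;
  hinner_pos : forall x, 0 <= hinner x x;
  hinner_def : forall x, hinner x x = 0 -> x = hzero;
  hcomplete : forall u : nat -> hcar,
    (forall eps, 0 < eps -> exists N, forall m n, (N <= m)%nat -> (N <= n)%nat ->
        sqrt (hinner (hadd (u m) (hopp (u n))) (hadd (u m) (hopp (u n)))) < eps) ->
    exists x, forall eps, 0 < eps -> exists N, forall n, (N <= n)%nat ->
        sqrt (hinner (hadd (u n) (hopp x)) (hadd (u n) (hopp x))) < eps
}.

Arguments hadd {h}. Arguments hopp {h}. Arguments hzero {h}.
Arguments hscal {h}. Arguments hinner {h}.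

Definition hnorm {H : Hilbert} (x : H) : R := sqrt (hinner x x).
Definition hsub {H : Hilbert} (x y : H) : H := hadd x (hopp y).

Definition weak_cv {H : Hilbert} (u : nat -> H) (x : H) : Prop :=
  forall y : H, Un_cv (fun n => hinner (u n) y) (hinner x y).

Definition weakly_seq_continuous {H1 H2 : Hilbert} (F : H1 -> H2) : Prop :=
  forall (u : nat -> H1) (x : H1), weak_cv u x -> weak_cv (fun n => F (u n)) (F x).

(* Extended nonnegative reals [0, ∞]: Fin r (with r >= 0 imposed separately) or PInf. *)
Inductive ereal : Type := Fin (r : R) | PInf.

Definition ele (a b : ereal) : Prop :=
  match a, b with
  | Fin x, Fin y => x <= y
  | _, PInf => True
  | PInf, Fin _ => False
  end.

Definition eadd (a b : ereal) : ereal :=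
  match a, b with
  | Fin x, Fin y => Fin (x + y)
  | _, _ => PInf
  end.

Definition nonneg_valued {H : Hilbert} (F : H -> ereal) : Prop :=
  forall x r, F x = Fin r -> 0 <= r.

Definition coercive {H : Hilbert} (F : H -> ereal) : Prop :=
  forall u : nat -> H,
    (exists M : R, forall n, ele (F (u n)) (Fin M)) ->
    exists B : R, forall n, hnorm (u n) <= B.

(* Weak sequential lower semicontinuity: u_n ⇀ x implies F x <= liminf F(u_n),
   written out: for every real a < F x, eventually a < F(u_n). *)
Definition weakly_seq_lsc {H : Hilbert} (F : H -> ereal) : Prop :=
  forall (u : nat -> H) (x : H), weak_cv u x ->
    forall a : R, ~ ele (F x) (Fin a) ->
      exists N, forall n, (N <= n)%nat -> ~ ele (F (u n)) (Fin a).

Definition countable (L : Type) : Prop :=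
  exists f : L -> nat, forall a b, f a = f b -> a = b.

Definition sumsq_list {L : Type} (f : L -> R) (l : list L) : R :=
  fold_right (fun i acc => f i * f i + acc) 0 l.

Definition l2_sumsq {L : Type} (f : L -> R) (s : R) : Prop :=
  is_lub (fun t => exists l : list L, NoDup l /\ t = sumsq_list f l) s.

Definition in_l2 {L : Type} (f : L -> R) : Prop := exists s, l2_sumsq f s.

(* Ξ = ℓ²(Λ): T is a linear bijection of Ξ onto ℓ²(Λ) preserving the norm. *)
Definition is_l2_of (Xi : Hilbert) (L : Type) (T : Xi -> (L -> R)) : Prop :=
  (forall x y i, T (hadd x y) i = T x i + T y i) /\
  (forall a x i, T (hscal a x) i = a * T x i) /\
  (forall x y, (forall i, T x i = T y i) -> x = y) /\
  (forall f, in_l2 f -> exists x, forall i, T x i = f i) /\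
  (forall x, l2_sumsq (T x) (hinner x x)).

Definition aNETT {X Xi : Hilbert} (E : X -> Xi) (D : Xi -> X) (psi : Xi -> ereal)
  (c : R) (x : X) : ereal :=
  eadd (psi (E x)) (Fin (c / 2 * (hnorm (hsub x (D (E x)))) ^ 2)).

(* Main.v *)
Require Import Defs.
From Stdlib Require Import Reals Lra Lia Arith ZArith List ClassicalEpsilon Classical FunctionalExtensionality.
Open Scope R_scope.

Section HB.
Context {H : Hilbert}.

Lemma add_zero_l (x : H) : hadd hzero x = x.
Proof. rewrite hadd_comm; apply hadd_zero. Qed.

Lemma inner_zero_l (y : H) : hinner hzero y = 0.
Proof.
  assert (E : hinner (hadd (@hzero H) hzero) y = hinner hzero y) by (rewrite hadd_zero; auto).
  rewrite hinner_add_l in E; lra.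
Qed.

Lemma inner_zero_r (y : H) : hinner y hzero = 0.
Proof. rewrite hinner_sym; apply inner_zero_l. Qed.

Lemma inner_opp_l (x y : H) : hinner (hopp x) y = - hinner x y.
Proof.
  assert (E : hinner (hadd x (hopp x)) y = 0) by (rewrite hadd_opp; apply inner_zero_l).
  rewrite hinner_add_l in E; lra.
Qed.

Lemma inner_add_r (x y z : H) : hinner x (hadd y z) = hinner x y + hinner x z.
Proof. rewrite hinner_sym, hinner_add_l, (hinner_sym _ y), (hinner_sym _ z); auto. Qed.

Lemma inner_opp_r (x y : H) : hinner x (hopp y) = - hinner x y.
Proof. rewrite hinner_sym, inner_opp_l, hinner_sym; auto. Qed.

Lemma inner_scal_r a (x y : H) : hinner x (hscal a y) = a * hinner x y.
Proof. rewrite hinner_sym, hinner_scal_l, hinner_sym; auto. Qed.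

Lemma inner_sub_l (x y z : H) : hinner (hsub x y) z = hinner x z - hinner y z.
Proof. unfold hsub; rewrite hinner_add_l, inner_opp_l; ring. Qed.

Lemma inner_sub_r (x y z : H) : hinner z (hsub x y) = hinner z x - hinner z y.
Proof. unfold hsub; rewrite inner_add_r, inner_opp_r; ring. Qed.

Lemma hnorm_ge0 (x : H) : 0 <= hnorm x.
Proof. apply sqrt_pos. Qed.

Lemma hnorm_sq (x : H) : hnorm x * hnorm x = hinner x x.
Proof. unfold hnorm; apply sqrt_sqrt, hinner_pos. Qed.

Lemma sub_add (x y : H) : hadd (hsub x y) y = x.
Proof.
  unfold hsub; rewrite <- hadd_assoc, (hadd_comm _ (hopp y)), hadd_opp, hadd_zero; auto.
Qed.

Lemma CS (x y : H) : Rabs (hinner x y) <= hnorm x * hnorm y.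
Proof.
  destruct (Req_dec (hinner y y) 0) as [E|E].
  - rewrite (hinner_def _ _ E), inner_zero_r, Rabs_R0.
    apply Rmult_le_pos; apply hnorm_ge0.
  - set (t := - hinner x y / hinner y y).
    pose proof (hinner_pos _ (hadd x (hscal t y))) as P.
    rewrite hinner_add_l, !inner_add_r, !hinner_scal_l, !inner_scal_r in P.
    rewrite (hinner_sym _ y x) in P.
    pose proof (hinner_pos _ y) as Py.
    assert (Py' : 0 < hinner y y) by lra.
    assert (K : (hinner x y)^2 <= hinner x x * hinner y y).
    { unfold t in P. 
      assert (P2 : 0 <= hinner y y * (hinner x x + - hinner x y / hinner y y * hinner x y +
        (- hinner x y / hinner y y * hinner x y + - hinner x y / hinner y y * (- hinner x y / hinner y y * hinner y y)))) by (apply Rmult_le_pos; lra).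
      replace (hinner y y * (hinner x x + - hinner x y / hinner y y * hinner x y +
        (- hinner x y / hinner y y * hinner x y + - hinner x y / hinner y y * (- hinner x y / hinner y y * hinner y y))))
        with (hinner x x * hinner y y - (hinner x y)^2) in P2 by (field; lra).
      lra. }
    rewrite <- sqrt_pow2 with (x := Rabs _) by apply Rabs_pos.
    unfold hnorm; rewrite <- sqrt_mult by apply (hinner_pos H).
    apply sqrt_le_1_alt. rewrite pow2_abs. exact K.
Qed.

Lemma tri (x y : H) : hnorm (hadd x y) <= hnorm x + hnorm y.
Proof.
  pose proof (CS x y). pose proof (hnorm_sq x). pose proof (hnorm_sq y).
  pose proof (hnorm_sq (hadd x y)) as Q. pose proof (hnorm_ge0 x). pose proof (hnorm_ge0 y).
  pose proof (hnorm_ge0 (hadd x y)).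
  rewrite hinner_add_l, !inner_add_r, (hinner_sym _ y x) in Q.
  pose proof (Rle_abs (hinner x y)).
  apply Rsqr_incr_0_var; unfold Rsqr; nra.
Qed.

Lemma norm_sub_le (x y : H) : hnorm x <= hnorm (hsub x y) + hnorm y.
Proof. rewrite <- (sub_add x y) at 1; apply tri. Qed.

End HB.

Section Hump.
Context {H : Hilbert}.

Lemma norm_scal t (v : H) : hnorm (hscal t v) = Rabs t * hnorm v.
Proof.
  unfold hnorm. rewrite hinner_scal_l, inner_scal_r, <- Rmult_assoc.
  rewrite sqrt_mult_alt by (rewrite <- Rsqr_def; apply Rle_0_sqr).
  fold (Rsqr t); rewrite sqrt_Rsqr_abs; auto.
Qed.

Lemma inner_sub_sub (a b : H) :
  hinner (hsub a b) (hsub a b) = hinner a a - 2 * hinner a b + hinner b b.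
Proof. rewrite !inner_sub_l, !inner_sub_r, (hinner_sym _ b a); ring. Qed.

Lemma norm_sub_sym (a b : H) : hnorm (hsub a b) = hnorm (hsub b a).
Proof. unfold hnorm; rewrite !inner_sub_sub, (hinner_sym _ b a); f_equal; ring. Qed.

Lemma sub_add_r (a b c : H) : hsub (hadd a b) c = hadd (hsub a c) b.
Proof.
  unfold hsub. rewrite <- !hadd_assoc, (hadd_comm _ b); auto.
Qed.

Lemma hadd_sub (a b : H) : hsub (hadd a b) a = b.
Proof.
  rewrite sub_add_r. unfold hsub; rewrite hadd_opp; apply add_zero_l.
Qed.

Lemma finite_bound (f : nat -> R) (N : nat) : exists M, forall n, (n < N)%nat -> f n <= M.
Proof.
  induction N as [|N [M HM]].
  - exists 0; intros; lia.
  - exists (Rmax M (f N)); intros n Hn.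
    destruct (Nat.eq_dec n N) as [->|Hne]; [apply Rmax_r|].
    eapply Rle_trans; [apply HM; lia| apply Rmax_l].
Qed.

Lemma half_pow_pos n : 0 < (/2)^n.
Proof. apply pow_lt; lra. Qed.

Lemma half_pow_le1 n : (/2)^n <= 1.
Proof. induction n; simpl; lra. Qed.

Variable u : nat -> H.
Variable x : H.
Hypothesis Hw : weak_cv u x.

Let z n := hsub (u n) x.

Lemma wcv_bounded : exists B, forall n, hnorm (u n) <= B.
Proof.
  apply NNPP; intro Hnb.
  assert (Unb : forall B N, exists n, (N <= n)%nat /\ B < hnorm (z n)).
  { intros B N. apply NNPP; intro Hc.
    destruct (finite_bound (fun n => hnorm (z n)) N) as [M HM].
    apply Hnb. exists (Rmax B M + hnorm x). intro n.
    eapply Rle_trans; [apply norm_sub_le with (y := x)|]. apply Rplus_le_compat_r.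
    fold (z n).
    destruct (le_lt_dec N n) as [Hl|Hl].
    - eapply Rle_trans; [|apply Rmax_l]. apply Rnot_lt_le; intro Hlt; apply Hc; eauto.
    - eapply Rle_trans; [apply HM; auto| apply Rmax_r]. }
  assert (Step : forall (y : H) (A : R) (m : nat), exists n,
            (m <= n)%nat /\ Rabs (hinner (z n) y) <= 1 /\ A <= hnorm (z n)).
  { intros y A m. destruct (Hw y 1 Rlt_0_1) as [N HN].
    destruct (Unb A (max N m)) as [n [Hn1 Hn2]].
    exists n; split; [lia|split; [|lra]].
    unfold z; rewrite inner_sub_l. specialize (HN n ltac:(lia)).
    unfold R_dist in HN; lra. }
  assert (sel : forall (y : H) (A : R) (m : nat), {n | (m <= n)%nat /\ Rabs (hinner (z n) y) <= 1 /\ A <= hnorm (z n)}).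
  { intros; apply constructive_indefinite_description; auto. }
  set (K m A := (INR m + 2) * 2 ^ m * A).
  set (a m A := (/2) ^ m / A).
  set (kf y A m := proj1_sig (sel y (K m A) m)).
  assert (kf_spec : forall y A m, (m <= kf y A m)%nat /\ Rabs (hinner (z (kf y A m)) y) <= 1 /\ K m A <= hnorm (z (kf y A m))).
  { intros; unfold kf; destruct (sel y (K m A) m); auto. }
  clearbody kf.
  set (st := fix st (m : nat) : H * R :=
         match m with
         | O => (hzero, 1)
         | S m' => let y := fst (st m') in let A := snd (st m') in
                   let n := kf y A m' in
                   (hadd y (hscal (a m' A / hnorm (z n)) (z n)), hnorm (z n))
         end).
  set (ys m := fst (st m)). set (As m := snd (st m)). set (k m := kf (ys m) (As m) m).
  assert (Ek : forall m, (m <= k m)%nat /\ Rabs (hinner (z (k m)) (ys m)) <= 1 /\ K m (As m) <= hnorm (z (k m))).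
  { intro m; apply kf_spec. }
  assert (EyS : forall m, ys (S m) = hadd (ys m) (hscal (a m (As m) / hnorm (z (k m))) (z (k m)))).
  { intro m; reflexivity. }
  assert (EAS : forall m, As (S m) = hnorm (z (k m))) by (intro; reflexivity).
  assert (KA : forall m, 1 <= As m -> As m <= K m (As m)).
  { intros m Hm. unfold K. assert (1 <= (INR m + 2) * 2 ^ m).
    { pose proof (pos_INR m). assert (1 <= 2 ^ m) by (apply pow_R1_Rle; lra). nra. }
    nra. }
  assert (A1 : forall m, 1 <= As m).
  { induction m; [unfold As; simpl; lra|]. rewrite EAS.
    destruct (Ek m) as [_ [_ E3]]. specialize (KA m IHm). lra. }
  assert (Amono : forall m (i : nat), As m <= As (m + i)%nat).
  { intros m i; induction i; [rewrite Nat.add_0_r; lra|].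
    rewrite Nat.add_succ_r, EAS. destruct (Ek (m+i)%nat) as [_ [_ E3]].
    specialize (KA _ (A1 (m+i)%nat)). lra. }
  assert (Znz : forall m, 1 <= hnorm (z (k m))).
  { intro m; destruct (Ek m) as [_ [_ E3]]. specialize (KA _ (A1 m)). specialize (A1 m). lra. }
  assert (Inc : forall m, hnorm (hscal (a m (As m) / hnorm (z (k m))) (z (k m))) <= (/2)^m).
  { intro m. rewrite norm_scal. specialize (Znz m). specialize (A1 m).
    pose proof (half_pow_pos m).
    unfold a. rewrite Rabs_right.
    - replace ((/2)^m / As m / hnorm (z (k m)) * hnorm (z (k m))) with ((/2)^m / As m) by (field; lra).
      apply Rmult_le_reg_r with (As m); [lra|]. unfold Rdiv; rewrite Rmult_assoc, Rinv_l by lra. nra.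
    - apply Rle_ge; unfold Rdiv; apply Rmult_le_pos; [apply Rmult_le_pos|]; try (left; apply Rinv_0_lt_compat); lra. }
  assert (Cau : forall p (i:nat), hnorm (hsub (ys (p + i)%nat) (ys p)) <= 2 * (/2)^p - 2 * (/2)^(p+i)).
  { intros p i; induction i.
    - rewrite Nat.add_0_r. unfold hsub; rewrite hadd_opp. unfold hnorm; rewrite inner_zero_l, sqrt_0. lra.
    - rewrite Nat.add_succ_r, EyS, sub_add_r.
      eapply Rle_trans; [apply tri|]. pose proof (Inc (p+i)%nat).
      simpl. lra. }
  assert (Cauchy : forall eps, 0 < eps -> exists N, forall m n, (N <= m)%nat -> (N <= n)%nat ->
        sqrt (hinner (hadd (ys m) (hopp (ys n))) (hadd (ys m) (hopp (ys n)))) < eps).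
  { intros eps Heps. destruct (pow_lt_1_zero (/2) ltac:(rewrite Rabs_right; lra) (eps/2) ltac:(lra)) as [N HN].
    exists N; intros m n Hm Hn. fold (hsub (ys m) (ys n)). fold (hnorm (hsub (ys m) (ys n))).
    specialize (HN N (le_n _)). rewrite Rabs_right in HN by (apply Rle_ge, pow_le; lra).
    assert (G : forall p i, (N <= p)%nat -> hnorm (hsub (ys (p+i)%nat) (ys p)) < eps).
    { intros p i Hp. eapply Rle_lt_trans; [apply Cau|].
      pose proof (half_pow_pos (p+i)).
      assert ((/2)^p <= (/2)^N).
      { replace p with (N + (p - N))%nat by lia. rewrite pow_add.
        pose proof (half_pow_le1 (p-N)). pose proof (half_pow_pos N). nra. }
      lra. }
    destruct (le_lt_dec n m).
    - replace m with (n + (m - n))%nat by lia. apply G; auto.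
    - rewrite norm_sub_sym. replace n with (m + (n - m))%nat by lia. apply G; auto. }
  destruct (hcomplete H ys Cauchy) as [y Hy].
  assert (Low : forall m (i:nat), INR m + 1 - (/2)^m + (/2)^(m+i) <= hinner (z (k m)) (ys (S m + i)%nat)).
  { intros m i. induction i.
    - rewrite Nat.add_0_r, Nat.add_0_r, EyS, inner_add_r, inner_scal_r.
      destruct (Ek m) as [_ [E2 E3]]. specialize (Znz m). specialize (A1 m).
      replace (a m (As m) / hnorm (z (k m)) * hinner (z (k m)) (z (k m)))
        with (a m (As m) * hnorm (z (k m))).
      2:{ rewrite <- hnorm_sq. field. lra. }
      assert (a m (As m) * K m (As m) = INR m + 2).
      { unfold a, K. rewrite pow_inv. assert (2^m <> 0) by (apply pow_nonzero; lra). field. repeat split; try lra; auto. }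
      assert (0 < a m (As m)).
      { unfold a; apply Rdiv_lt_0_compat; [apply half_pow_pos|lra]. }
      pose proof (Rle_abs (- hinner (z (k m)) (ys m))) as Hab. rewrite Rabs_Ropp in Hab. nra.
    - replace (S m + S i)%nat with (S (S m + i)) by lia. rewrite EyS, inner_add_r, inner_scal_r.
      set (j := (S m + i)%nat) in *.
      pose proof (CS (z (k m)) (z (k j))) as Hc.
      assert (Aj : hnorm (z (k m)) <= As j).
      { rewrite <- EAS. unfold j; simpl. replace (S (m + i)) with (S m + i)%nat by lia. apply Amono. }
      specialize (Znz j). pose proof (A1 j).
      assert (B : Rabs (a j (As j) / hnorm (z (k j)) * hinner (z (k m)) (z (k j))) <= (/2)^j).
      { rewrite Rabs_mult. unfold a.
        rewrite (Rabs_right ((/2)^j / As j / hnorm (z (k j)))).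
        2:{ apply Rle_ge; unfold Rdiv; apply Rmult_le_pos; [apply Rmult_le_pos|]; try (left; apply Rinv_0_lt_compat); try lra. left; apply half_pow_pos. }
        pose proof (half_pow_pos j). pose proof (hnorm_ge0 (z (k m))).
        apply Rle_trans with ((/2)^j / As j / hnorm (z (k j)) * (hnorm (z (k m)) * hnorm (z (k j)))).
        { apply Rmult_le_compat_l; auto. unfold Rdiv; apply Rmult_le_pos; [apply Rmult_le_pos|]; try (left; apply Rinv_0_lt_compat); lra. }
        replace ((/2)^j / As j / hnorm (z (k j)) * (hnorm (z (k m)) * hnorm (z (k j))))
          with ((/2)^j * (hnorm (z (k m)) / As j)) by (field; lra).
        assert (hnorm (z (k m)) / As j <= 1).
        { apply Rmult_le_reg_r with (As j); [lra|]. unfold Rdiv; rewrite Rmult_assoc, Rinv_l by lra. lra. }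
        nra. }
      pose proof (Rle_abs (- (a j (As j) / hnorm (z (k j)) * hinner (z (k m)) (z (k j))))) as Hab.
      rewrite Rabs_Ropp in Hab.
      unfold j in *. replace (m + S i)%nat with (S (m + i)) by lia.
      replace (S m + i)%nat with (S (m+i)) in * by lia. simpl (_ ^ S _) in *. lra. }
  assert (Lim : forall m, INR m - 1 <= hinner (z (k m)) y).
  { intro m. pose proof (hnorm_ge0 (z (k m))) as Hz.
    destruct (Hy (/ (hnorm (z (k m)) + 1)) ltac:(apply Rinv_0_lt_compat; lra)) as [N HN].
    specialize (HN (S m + N)%nat ltac:(lia)). fold (hsub (ys (S m + N)%nat) y) in HN.
    fold (hnorm (hsub (ys (S m + N)%nat) y)) in HN.
    pose proof (Low m N). pose proof (half_pow_pos (m+N)). pose proof (half_pow_le1 m).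
    pose proof (CS (z (k m)) (hsub (ys (S m + N)%nat) y)) as Hc.
    rewrite inner_sub_r in Hc.
    assert (hnorm (z (k m)) * hnorm (hsub (ys (S m + N)%nat) y) <= 1).
    { apply Rle_trans with (hnorm (z (k m)) * / (hnorm (z (k m)) + 1)).
      - apply Rmult_le_compat_l; lra.
      - apply Rmult_le_reg_r with (hnorm (z (k m)) + 1); [lra|].
        rewrite Rmult_assoc, Rinv_l by lra. lra. }
    pose proof (Rle_abs (hinner (z (k m)) (ys (S m + N)%nat) - hinner (z (k m)) y)). lra. }
  destruct (Hw y 1 Rlt_0_1) as [N HN].
  specialize (Lim (N + 3)%nat). destruct (Ek (N+3)%nat) as [E1 _].
  specialize (HN (k (N+3)%nat) ltac:(lia)). unfold R_dist in HN.
  unfold z in Lim; rewrite inner_sub_l in Lim. rewrite plus_INR in Lim. simpl in Lim.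
  pose proof (pos_INR N). pose proof (Rle_abs (hinner (u (k (N + 3)%nat)) y - hinner x y)). lra.
Qed.

End Hump.

Lemma nat_unbounded r : exists n, r < INR n.
Proof.
  destruct (archimed r) as [H1 _].
  exists (Z.to_nat (up r)).
  destruct (Z_lt_le_dec (up r) 0) as [Hl|Hl].
  - pose proof (pos_INR (Z.to_nat (up r))). apply IZR_lt in Hl. lra.
  - rewrite INR_IZR_INZ, Z2Nat.id by auto. lra.
Qed.

Lemma cv_const c : Un_cv (fun _ => c) c.
Proof. intros e He; exists 0%nat; intros; unfold R_dist; rewrite Rminus_diag, Rabs_R0; auto. Qed.

Section Lists.
Context {L : Type}.

Definition lsum (F : L -> R) (l : list L) : R := fold_right (fun i acc => F i + acc) 0 l.

Lemma sumsq_app (g : L -> R) A B : sumsq_list g (A ++ B) = sumsq_list g A + sumsq_list g B.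
Proof. induction A; simpl; [ring|]. unfold sumsq_list in *; simpl; rewrite IHA; ring. Qed.

Lemma sumsq_ge0 (g : L -> R) A : 0 <= sumsq_list g A.
Proof. induction A; simpl; [lra|]. unfold sumsq_list in *; simpl. pose proof (Rle_0_sqr (g a)). unfold Rsqr in *. lra. Qed.

Lemma sumsq_incl (g : L -> R) A : forall l, NoDup A -> NoDup l -> incl A l -> sumsq_list g A <= sumsq_list g l.
Proof.
  induction A as [|a A IH]; intros l HA Hl Hi.
  - simpl. apply sumsq_ge0.
  - assert (Ha : In a l) by (apply Hi; left; auto).
    destruct (in_split _ _ Ha) as [l1 [l2 ->]].
    rewrite sumsq_app. simpl. unfold sumsq_list at 1; simpl. fold (sumsq_list g A).
    inversion HA; subst.
    assert (IH' : sumsq_list g A <= sumsq_list g (l1 ++ l2)).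
    { apply IH; auto. eapply NoDup_remove_1; eauto.
      intros b Hb. assert (Hb' : In b (l1 ++ a :: l2)) by (apply Hi; right; auto).
      apply in_app_iff in Hb'. apply in_app_iff. destruct Hb' as [Hb'|[Hb'|Hb']]; auto.
      subst; contradiction. }
    rewrite sumsq_app in IH'. lra.
Qed.

Lemma sumsq_filter (g : L -> R) (p : L -> bool) A :
  sumsq_list g A = sumsq_list g (filter p A) + sumsq_list g (filter (fun i => negb (p i)) A).
Proof.
  induction A as [|a A IH]; simpl; [unfold sumsq_list; simpl; ring|].
  destruct (p a); simpl; unfold sumsq_list in *; simpl; rewrite IH; ring.
Qed.

Definition inb (l : list L) (i : L) : bool :=
  if excluded_middle_informative (In i l) then true else false.

Lemma inb_true l i : inb l i = true <-> In i l.
Proof. unfold inb; destruct (excluded_middle_informative (In i l)); split; auto; discriminate. Qed.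

Lemma sumsq_ext_in (g h : L -> R) A : (forall i, In i A -> g i = h i) -> sumsq_list g A = sumsq_list h A.
Proof.
  induction A as [|a A IH]; intros E; [reflexivity|].
  unfold sumsq_list in *; simpl. rewrite E by (left; auto). rewrite IH; auto. intros; apply E; right; auto.
Qed.

Lemma lsum_ext_in (g h : L -> R) A : (forall i, In i A -> g i = h i) -> lsum g A = lsum h A.
Proof.
  induction A as [|a A IH]; intros E; [reflexivity|].
  simpl. rewrite E by (left; auto). rewrite IH; auto. intros; apply E; right; auto.
Qed.

Lemma sumsq_lsum (g : L -> R) A : sumsq_list g A = lsum (fun i => g i * g i) A.
Proof. induction A; [reflexivity|]. unfold sumsq_list in *; simpl; rewrite IHA; auto. Qed.

Lemma sumsq_pm (a b : L -> R) A :
  sumsq_list (fun i => a i + b i) A - sumsq_list (fun i => a i - b i) A = 4 * lsum (fun i => a i * b i) A.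
Proof. induction A; unfold sumsq_list in *; simpl; [ring|]. lra. Qed.

Lemma sumsq_le_pt (g h : L -> R) A : (forall i, g i * g i <= h i * h i) -> sumsq_list g A <= sumsq_list h A.
Proof. intro E; induction A; unfold sumsq_list in *; simpl; [lra|]. specialize (E a). lra. Qed.

Lemma lsum_cv (F : nat -> L -> R) (G : L -> R) A :
  (forall i, Un_cv (fun n => F n i) (G i)) -> Un_cv (fun n => lsum (F n) A) (lsum G A).
Proof.
  intro HF; induction A; simpl.
  - apply cv_const.
  - apply CV_plus; auto.
Qed.

Lemma sumsq_cv (F : nat -> L -> R) (G : L -> R) A :
  (forall i, Un_cv (fun n => F n i) (G i)) -> Un_cv (fun n => sumsq_list (F n) A) (sumsq_list G A).
Proof.
  intro HF. rewrite sumsq_lsum.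
  apply Un_cv_ext with (fun n => lsum (fun i => F n i * F n i) A).
  - intro; symmetry; apply sumsq_lsum.
  - apply lsum_cv. intro; apply CV_mult; auto.
Qed.

End Lists.

Section L2.
Variable Xi : Hilbert.
Variable Lam : Type.
Variable T : Xi -> (Lam -> R).
Hypothesis hT : is_l2_of Xi Lam T.

Lemma T_add x y i : T (hadd x y) i = T x i + T y i.
Proof. destruct hT as [A _]; apply A. Qed.

Lemma T_zero i : T hzero i = 0.
Proof. pose proof (T_add hzero hzero i) as E. rewrite hadd_zero in E. lra. Qed.

Lemma T_opp x i : T (hopp x) i = - T x i.
Proof. pose proof (T_add x (hopp x) i) as E. rewrite hadd_opp, T_zero in E. lra. Qed.

Lemma T_sub x y i : T (hsub x y) i = T x i - T y i.
Proof. unfold hsub; rewrite T_add, T_opp; ring. Qed.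

Lemma T_l2 x : l2_sumsq (T x) (hinner x x).
Proof. destruct hT as [_ [_ [_ [_ A]]]]; apply A. Qed.

Lemma T_surj f : in_l2 f -> exists x, forall i, T x i = f i.
Proof. destruct hT as [_ [_ [_ [A _]]]]; apply A. Qed.

Lemma sumsq_le_norm x l : NoDup l -> sumsq_list (T x) l <= hinner x x.
Proof. intro Hl. apply (T_l2 x). exists l; auto. Qed.

Lemma coord_le x i : Rabs (T x i) <= hnorm x.
Proof.
  pose proof (sumsq_le_norm x (i :: nil) ltac:(constructor; [auto|constructor])) as E.
  unfold sumsq_list in E; simpl in E. rewrite Rplus_0_r in E.
  rewrite <- sqrt_Rsqr_abs. unfold hnorm. apply sqrt_le_1_alt. unfold Rsqr; auto.
Qed.

Lemma lub_approx E s eps : is_lub E s -> 0 < eps -> exists t, E t /\ s - eps < t.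
Proof.
  intros [Hub Hl] He. apply NNPP; intro Hn.
  assert (s <= s - eps).
  { apply Hl. intros t Ht. apply Rnot_lt_le. intro; apply Hn; eauto. }
  lra.
Qed.

Lemma in_l2_bounded (f : Lam -> R) C : (forall l, NoDup l -> sumsq_list f l <= C) -> in_l2 f.
Proof.
  intro HC. destruct (completeness (fun t => exists l : list Lam, NoDup l /\ t = sumsq_list f l)) as [s Hs].
  - exists C. intros t [l [Hl ->]]; auto.
  - exists 0. exists nil; split; [constructor|reflexivity].
  - exists s; exact Hs.
Qed.

Lemma inner_finite (z w : Xi) (l : list Lam) :
  NoDup l -> (forall i, ~ In i l -> T w i = 0) ->
  hinner z w = lsum (fun i => T z i * T w i) l.
Proof.
  intros Hl Hw.
  set (S := lsum (fun i => T z i * T w i) l).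
  pose proof (T_l2 (hadd z w)) as Lp. pose proof (T_l2 (hsub z w)) as Lm.
  assert (Ep : T (hadd z w) = fun i => T z i + T w i) by (apply functional_extensionality; intro; apply T_add).
  assert (Em : T (hsub z w) = fun i => T z i - T w i) by (apply functional_extensionality; intro; apply T_sub).
  rewrite Ep in Lp; rewrite Em in Lm.
  set (p := hinner (hadd z w) (hadd z w)) in *. set (q := hinner (hsub z w) (hsub z w)) in *.
  set (hp := sumsq_list (fun i => T z i + T w i)). set (hm := sumsq_list (fun i => T z i - T w i)).
  assert (Ext : forall L, NoDup L -> NoDup (l ++ filter (fun i => negb (inb l i)) L) /\
            (forall g : Lam -> R, sumsq_list g L <= sumsq_list g (l ++ filter (fun i => negb (inb l i)) L))).
  { intros L HL. split.
    - apply NoDup_app; auto. apply NoDup_filter; auto.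
      intros a Ha Hb. apply filter_In in Hb. destruct Hb as [_ Hb].
      assert (inb l a = true) by (apply inb_true; auto). rewrite H in Hb; discriminate.
    - intro g. rewrite (sumsq_filter g (inb l) L), sumsq_app.
      apply Rplus_le_compat_r. apply sumsq_incl; auto. apply NoDup_filter; auto.
      intros a Ha. apply filter_In in Ha. apply inb_true; tauto. }
  assert (Rpart : forall L, hp (filter (fun i => negb (inb l i)) L) = hm (filter (fun i => negb (inb l i)) L)).
  { intro L. unfold hp, hm. apply sumsq_ext_in. intros i Hi.
    apply filter_In in Hi. destruct Hi as [_ Hi].
    rewrite Hw; [ring|]. intro Hin. apply inb_true in Hin. rewrite Hin in Hi; discriminate. }
  assert (Lpart : hp l = hm l + 4 * S) by (pose proof (sumsq_pm (T z) (T w) l); unfold hp, hm, S; lra).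
  assert (HpA : forall A B, hp (A ++ B) = hp A + hp B) by (intros; unfold hp; apply sumsq_app).
  assert (HmA : forall A B, hm (A ++ B) = hm A + hm B) by (intros; unfold hm; apply sumsq_app).
  assert (Hpq : p = q + 4 * S).
  { apply Rle_antisym.
    - apply Lp. intros t [L [HL ->]]. destruct (Ext L HL) as [HN HE].
      eapply Rle_trans; [apply HE|]. fold hp. rewrite HpA.
      rewrite Lpart, Rpart.
      assert (Hq : hm (l ++ filter (fun i => negb (inb l i)) L) <= q) by (apply Lm; eauto).
      rewrite HmA in Hq. lra.
    - assert (q <= p - 4 * S); [|lra].
      apply Lm. intros t [L [HL ->]]. destruct (Ext L HL) as [HN HE].
      eapply Rle_trans; [apply HE|]. fold hm. rewrite HmA.
      rewrite <- Rpart.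
      assert (Hq : hp (l ++ filter (fun i => negb (inb l i)) L) <= p) by (apply Lp; eauto).
      rewrite HpA in Hq. lra. }
  unfold p, q in Hpq.
  rewrite hinner_add_l, !inner_add_r, !inner_sub_l, !inner_sub_r, (hinner_sym _ w z) in Hpq.
  lra.
Qed.

End L2.

Lemma strict_mono (f : nat -> nat) : (forall n, (f n < f (S n))%nat) -> forall n m, (n < m)%nat -> (f n < f m)%nat.
Proof.
  intros Hf n m Hnm. induction m; [lia|].
  destruct (Nat.eq_dec n m) as [->|Hne]; [apply Hf|]. specialize (IHm ltac:(lia)). specialize (Hf m). lia.
Qed.

Lemma strict_ge (f : nat -> nat) : (forall n, (f n < f (S n))%nat) -> forall n, (n <= f n)%nat.
Proof. intros Hf n; induction n; [lia|]. specialize (Hf n); lia. Qed.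

Lemma BW (b : nat -> R) B : (forall n, Rabs (b n) <= B) ->
  exists th : nat -> nat, (forall n, (th n < th (S n))%nat) /\ exists l, Un_cv (fun n => b (th n)) l.
Proof.
  intro Hb.
  destruct (Bolzano_Weierstrass b (fun c => -B <= c <= B) (compact_P3 _ _)) as [l Hl].
  { intro n; specialize (Hb n). pose proof (Rle_abs (b n)); pose proof (Rle_abs (- b n)); rewrite Rabs_Ropp in *; split; lra. }
  assert (St : forall (n p : nat), exists q, (p < q)%nat /\ Rabs (b q - l) < / (INR n + 1)).
  { intros n p. assert (Hd : 0 < / (INR n + 1)) by (apply Rinv_0_lt_compat; pose proof (pos_INR n); lra).
    destruct (Hl (disc l (mkposreal _ Hd)) (S p)) as [q [Hq1 Hq2]].
    - exists (mkposreal _ Hd). intros y Hy; exact Hy.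
    - exists q; split; [lia|]. exact Hq2. }
  assert (sel : forall n p, {q | (p < q)%nat /\ Rabs (b q - l) < / (INR n + 1)})
    by (intros; apply constructive_indefinite_description; auto).
  set (th := fix th (n : nat) : nat := match n with O => O | S m => proj1_sig (sel m (th m)) end).
  exists th. split.
  - intro n. change (th (S n)) with (proj1_sig (sel n (th n))). destruct (proj2_sig (sel n (th n))); auto.
  - exists l. intros eps He. destruct (nat_unbounded (/ eps)) as [N HN].
    exists (S N). intros n Hn. destruct n as [|m]; [lia|].
    unfold R_dist. change (th (S m)) with (proj1_sig (sel m (th m))). destruct (proj2_sig (sel m (th m))) as [_ Hq].
    eapply Rlt_trans; [exact Hq|].
    assert (INR N <= INR m) by (apply le_INR; lia).
    assert (0 < / eps) by (apply Rinv_0_lt_compat; auto).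
    rewrite <- (Rinv_inv eps). apply Rinv_lt_contravar; [apply Rmult_lt_0_compat|]; lra.
Qed.

Lemma diag (a : nat -> nat -> R) B : (forall k n, Rabs (a k n) <= B) ->
  exists phi : nat -> nat, (forall n, (n <= phi n)%nat) /\ forall k, exists l, Un_cv (fun n => a k (phi n)) l.
Proof.
  intro Ha.
  assert (Th : forall b : nat -> R, exists th : nat -> nat, (forall n, Rabs (b n) <= B) ->
     (forall n, (th n < th (S n))%nat) /\ exists l, Un_cv (fun n => b (th n)) l).
  { intro b. destruct (classic (forall n, Rabs (b n) <= B)) as [Hb|Hb].
    - destruct (BW b B Hb) as [th Hth]. exists th; auto.
    - exists (fun n => n). intro; contradiction. }
  assert (Thc : forall b : nat -> R, {th : nat -> nat | (forall n, Rabs (b n) <= B) ->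
     (forall n, (th n < th (S n))%nat) /\ exists l, Un_cv (fun n => b (th n)) l})
    by (intro; apply constructive_indefinite_description; auto).
  set (Theta b := proj1_sig (Thc b)).
  assert (ThS : forall b, (forall n, Rabs (b n) <= B) ->
     (forall n, (Theta b n < Theta b (S n))%nat) /\ exists l, Un_cv (fun n => b (Theta b n)) l)
    by (intro b; unfold Theta; destruct (Thc b); auto).
  clearbody Theta.
  set (Psi := fix Psi (k : nat) : nat -> nat := match k with
            | O => fun n => n
            | S k' => fun n => Psi k' (Theta (fun m => a k' (Psi k' m)) n) end).
  assert (PsiS : forall k n, Psi (S k) n = Psi k (Theta (fun m => a k (Psi k m)) n)) by reflexivity.
  assert (Pstrict : forall k n, (Psi k n < Psi k (S n))%nat).
  { induction k; intro n; [simpl; lia|].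
    rewrite !PsiS. apply strict_mono; auto. apply ThS. intro; apply Ha. }
  assert (Pconv : forall k, exists l, Un_cv (fun n => a k (Psi (S k) n)) l).
  { intro k. destruct (ThS (fun m => a k (Psi k m)) (fun n => Ha _ _)) as [_ [l Hl]].
    exists l. exact Hl. }
  assert (Tail : forall k i, exists s : nat -> nat, (forall m, (m <= s m)%nat) /\
            forall m, Psi (i + S k)%nat m = Psi (S k) (s m)).
  { intros k i; induction i as [|i [s [Hs1 Hs2]]].
    - exists (fun m => m); split; auto.
    - exists (fun m => s (Theta (fun m0 => a (i + S k)%nat (Psi (i + S k)%nat m0)) m)). split.
      + intro m. eapply Nat.le_trans; [|apply Hs1]. apply strict_ge. apply ThS. intro; apply Ha.
      + intro m. simpl (S i + S k)%nat. rewrite PsiS. apply Hs2. }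
  exists (fun n => Psi n n). split.
  - intro n. apply strict_ge, Pstrict.
  - intro k. destruct (Pconv k) as [l Hl]. exists l. intros eps He.
    destruct (Hl eps He) as [N HN]. exists (max N (S k)). intros n Hn.
    destruct (Tail k (n - S k)%nat) as [s [Hs1 Hs2]].
    replace (n - S k + S k)%nat with n in Hs2 by lia.
    rewrite Hs2. apply HN. specialize (Hs1 n). lia.
Qed.

Lemma norm_opp {H : Hilbert} (x : H) : hnorm (hopp x) = hnorm x.
Proof. unfold hnorm; rewrite inner_opp_l, inner_opp_r; f_equal; ring. Qed.

Lemma norm_sub_tri {H : Hilbert} (x y : H) : hnorm (hsub x y) <= hnorm x + hnorm y.
Proof. unfold hsub; rewrite <- (norm_opp y); apply tri. Qed.

Lemma wcompact (Xi : Hilbert) (Lam : Type) (T : Xi -> (Lam -> R)) (f : Lam -> nat)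
  (hf : forall a b, f a = f b -> a = b) (hT : is_l2_of Xi Lam T)
  (u : nat -> Xi) (B : R) : (forall n, hnorm (u n) <= B) ->
  exists phi : nat -> nat, (forall n, (n <= phi n)%nat) /\ exists x, weak_cv (fun n => u (phi n)) x.
Proof.
  intro Hu.
  set (a k n := match excluded_middle_informative (exists i, f i = k) with
                | left Hex => T (u n) (proj1_sig (constructive_indefinite_description _ Hex))
                | right _ => 0 end).
  assert (Ha : forall k n, Rabs (a k n) <= B).
  { intros k n; unfold a. destruct (excluded_middle_informative _).
    - eapply Rle_trans; [apply coord_le; auto| apply Hu].
    - rewrite Rabs_R0. eapply Rle_trans; [apply (hnorm_ge0 (u n))|apply (Hu n)]. }
  destruct (diag a B Ha) as [phi [Hphi Hconv]].
  exists phi; split; auto.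
  assert (Cv : forall i, exists l, Un_cv (fun n => T (u (phi n)) i) l).
  { intro i. destruct (Hconv (f i)) as [l Hl]. exists l.
    eapply Un_cv_ext; [|exact Hl]. intro n; unfold a.
    destruct (excluded_middle_informative _) as [Hex|Hex]; [|exfalso; apply Hex; eauto].
    destruct (constructive_indefinite_description _ Hex) as [j Hj]; simpl.
    rewrite (hf _ _ Hj). reflexivity. }
  set (g i := proj1_sig (constructive_indefinite_description _ (Cv i))).
  assert (Hg : forall i, Un_cv (fun n => T (u (phi n)) i) (g i)).
  { intro i; unfold g; destruct (constructive_indefinite_description _ _); auto. }
  clearbody g.
  assert (gl2 : in_l2 g).
  { apply (in_l2_bounded Lam g (B * B)). intros l Hl.
    apply Rle_cv_lim with (fun n => sumsq_list (T (u (phi n))) l) (fun _ => B * B).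
    - intro n. eapply Rle_trans; [apply (sumsq_le_norm Xi Lam T hT); auto|].
      rewrite <- hnorm_sq. specialize (Hu (phi n)). pose proof (hnorm_ge0 (u (phi n))). nra.
    - apply sumsq_cv; auto.
    - apply cv_const. }
  destruct (T_surj Xi Lam T hT g gl2) as [x Hx].
  exists x. intros y eps He.
  set (C := B + hnorm x).
  set (zn n := hsub (u (phi n)) x).
  assert (HzC : forall n, hnorm (zn n) <= C).
  { intro n; unfold zn, C. eapply Rle_trans; [apply norm_sub_tri|]. specialize (Hu (phi n)); lra. }
  assert (C0 : 0 <= C) by (eapply Rle_trans; [apply (hnorm_ge0 (zn 0%nat))|apply (HzC 0%nat)]).
  set (d := eps / (2 * (C + 1))).
  assert (Hd : 0 < d) by (unfold d; apply Rdiv_lt_0_compat; lra).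
  destruct (lub_approx _ _ (d * d) (T_l2 Xi Lam T hT y) ltac:(nra)) as [t [[l [Hl ->]] Ht]].
  set (h i := if excluded_middle_informative (In i l) then T y i else 0).
  assert (hl2 : in_l2 h).
  { apply (in_l2_bounded Lam h (hinner y y)). intros L HL.
    eapply Rle_trans; [|apply (sumsq_le_norm Xi Lam T hT y L HL)].
    apply sumsq_le_pt. intro i; unfold h; destruct (excluded_middle_informative _); [lra|].
    pose proof (Rle_0_sqr (T y i)); unfold Rsqr in *; lra. }
  destruct (T_surj Xi Lam T hT h hl2) as [p Hp].
  assert (Hpoff : forall i, ~ In i l -> T p i = 0).
  { intros i Hi; rewrite Hp; unfold h; destruct (excluded_middle_informative _); tauto. }
  assert (Hpon : forall i, In i l -> T p i = T y i).
  { intros i Hi; rewrite Hp; unfold h; destruct (excluded_middle_informative _); tauto. }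
  set (S := sumsq_list (T y) l) in *.
  assert (Eyp : hinner y p = S).
  { rewrite (inner_finite Xi Lam T hT y p l Hl Hpoff). unfold S; rewrite sumsq_lsum.
    apply lsum_ext_in; intros i Hi; rewrite Hpon; auto. }
  assert (Epp : hinner p p = S).
  { rewrite (inner_finite Xi Lam T hT p p l Hl Hpoff). unfold S; rewrite sumsq_lsum.
    apply lsum_ext_in; intros i Hi; rewrite Hpon; auto. }
  assert (Nyp : hnorm (hsub y p) <= d).
  { assert (E2 : hnorm (hsub y p) * hnorm (hsub y p) < d * d).
    { rewrite hnorm_sq, inner_sub_sub, Eyp, Epp. lra. }
    pose proof (hnorm_ge0 (hsub y p)). nra. }
  assert (Cz : Un_cv (fun n => hinner (zn n) p) 0).
  { eapply Un_cv_ext.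
    - intro n. symmetry. apply (inner_finite Xi Lam T hT (zn n) p l Hl Hpoff).
    - replace 0 with (lsum (fun i => 0 * T p i) l).
      2:{ clear; induction l; simpl; [auto|]. rewrite IHl; ring. }
      apply lsum_cv. intro i. apply CV_mult; [|apply cv_const].
      replace 0 with (g i - T x i) by (rewrite Hx; ring).
      unfold zn. eapply Un_cv_ext; [intro n; symmetry; apply T_sub; auto|].
      apply CV_minus; [apply Hg|apply cv_const]. }
  destruct (Cz (eps / 2) ltac:(lra)) as [N HN].
  exists N. intros n Hn. specialize (HN n Hn). unfold R_dist in *. rewrite Rminus_0_r in HN.
  replace (hinner (u (phi n)) y - hinner x y) with (hinner (zn n) p + hinner (zn n) (hsub y p)).
  2:{ unfold zn. rewrite inner_sub_r, !inner_sub_l. ring. }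
  pose proof (CS (zn n) (hsub y p)) as Hc. pose proof (HzC n).
  pose proof (hnorm_ge0 (zn n)). pose proof (hnorm_ge0 (hsub y p)).
  assert (Hb : hnorm (zn n) * hnorm (hsub y p) <= C * d) by (apply Rmult_le_compat; auto).
  assert (C * d < eps / 2).
  { unfold d. apply Rmult_lt_reg_r with (2 * (C + 1)); [lra|].
    unfold Rdiv. replace (C * (eps * / (2 * (C + 1))) * (2 * (C + 1))) with (C * eps) by (field; lra).
    nra. }
  eapply Rle_lt_trans; [apply Rabs_triang|]. lra.
Qed.

Lemma bounded_image (X Xi : Hilbert) (Lam : Type) (T : Xi -> (Lam -> R)) (D : Xi -> X) :
  countable Lam -> is_l2_of Xi Lam T -> weakly_seq_continuous D ->
  forall (v : nat -> Xi) B, (forall n, hnorm (v n) <= B) ->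
  exists B', forall n, hnorm (D (v n)) <= B'.
Proof.
  intros [f hf] hT HD v B Hv. apply NNPP; intro Hn.
  assert (Ex : forall k : nat, exists n, INR k < hnorm (D (v n))).
  { intro k. apply NNPP; intro Hk. apply Hn. exists (INR k). intro n.
    apply Rnot_lt_le; intro; apply Hk; eauto. }
  assert (sel : forall k : nat, {n | INR k < hnorm (D (v n))})
    by (intro; apply constructive_indefinite_description; auto).
  set (w k := v (proj1_sig (sel k))).
  assert (Hw : forall k, INR k < hnorm (D (w k))) by (intro k; unfold w; destruct (sel k); auto).
  destruct (wcompact Xi Lam T f hf hT w B (fun k => Hv _)) as [phi [Hphi [x Hx]]].
  destruct (wcv_bounded _ _ (HD _ _ Hx)) as [B'' HB].
  destruct (nat_unbounded B'') as [k Hk].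
  specialize (HB k). specialize (Hw (phi k)). simpl in HB.
  assert (INR k <= INR (phi k)) by (apply le_INR; auto). lra.
Qed.

Theorem mainTheorem1
  (X Y Xi : Hilbert) (Lam : Type) (T : Xi -> (Lam -> R))
  (K : X -> Y) (E : X -> Xi) (D : Xi -> X) (psi : Xi -> ereal) (c : R) :
  countable Lam ->
  is_l2_of Xi Lam T ->
  weakly_seq_continuous K ->
  weakly_seq_continuous E ->
  weakly_seq_continuous D ->
  nonneg_valued psi ->
  coercive psi ->
  weakly_seq_lsc psi ->
  0 < c ->
  coercive (aNETT E D psi c).
Proof.
  intros HL hT _ _ HD Hnn Hco _ Hc u [M HM].
  assert (Hpart : forall n, ele (psi (E (u n))) (Fin M) /\
            hnorm (hsub (u n) (D (E (u n)))) <= 2 * M / c + 1).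
  { intro n. specialize (HM n). unfold aNETT in HM.
    destruct (psi (E (u n))) as [r|] eqn:Er; simpl in HM; [|contradiction].
    specialize (Hnn _ _ Er).
    set (t := hnorm (hsub (u n) (D (E (u n))))) in *.
    assert (0 <= c / 2 * t ^ 2) by (apply Rmult_le_pos; [lra|apply pow2_ge_0]).
    split; simpl; [lra|].
    assert (t * t <= 2 * M / c).
    { apply Rmult_le_reg_l with (c / 2); [lra|].
      replace (c / 2 * (2 * M / c)) with M by (field; lra). simpl in *. lra. }
    pose proof (hnorm_ge0 (hsub (u n) (D (E (u n))))) as Hg. fold t in Hg. nra. }
  destruct (Hco (fun n => E (u n)) (ex_intro _ M (fun n => proj1 (Hpart n)))) as [B HB].
  destruct (bounded_image X Xi Lam T D HL hT HD _ B HB) as [B' HB'].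
  exists (2 * M / c + 1 + B'). intro n.
  eapply Rle_trans; [apply (norm_sub_le (u n) (D (E (u n))))|].
  specialize (HB' n). destruct (Hpart n) as [_ H2]. lra.
Qed.
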